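(* For every MWSBP instance with $s_i=w_i$ for all items $i\in[n]$, every output of the WFFI-R algorithm has cost at most $\frac{7+\sqrt{37}}{8}\cdot\mathtt{OPT}$.
   Context: Min-Weighted Sum Bin Packing (MWSBP): an instance consists of $n$ items with sizes $s_i\in(0,1]$ and weights $w_i>0$. A feasible solution is a partition of $[n]$ into bins $B_1,\ldots,B_p$ with $\sum_{i\in B_k}s_i\le 1$; its cost is $\sum_{k=1}^p k\sum_{i\in B_k}w_i$; $\mathtt{OPT}$ is the minimum cost. The WFFI-R algorithm: sort the items in nondecreasing order of $s_i/w_i$ (ties broken arbitrarily; when $s_i=w_i$ for all $i$ any order is allowed); process them with First-Fit, i.e., put each item into the earliest-opened bin in which it still fits (total size $\le1$), opening a new bin if it fits in none; finally, reorder the resulting bins in nonincreasing order of their total weight. *)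

(* Defs.v *)
From mathcomp Require Import all_boot all_order all_algebra.
Set Implicit Arguments. Unset Strict Implicit. Unset Printing Implicit Defensive.
Import Order.TTheory GRing.Theory Num.Theory.
Local Open Scope ring_scope.

Section MWSBP.
Variables (R : rcfType) (n : nat).

Definition load (f : 'I_n -> R) (B : seq 'I_n) : R := \sum_(j <- B) f j.

Definition cost (w : 'I_n -> R) (L : seq (seq 'I_n)) : R :=
  \sum_(k < size L) (k.+1)%:R * load w (nth [::] L k).

Definition feasible (s : 'I_n -> R) (P : seq (seq 'I_n)) : Prop :=
  perm_eq (flatten P) (enum 'I_n) /\
  all (fun B => B != [::]) P /\
  all (fun B => load s B <= 1) P.

Fixpoint ff_insert (s : 'I_n -> R) (i : 'I_n) (bins : seq (seq 'I_n))
  : seq (seq 'I_n) :=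
  match bins with
  | [::] => [:: [:: i]]
  | B :: bs => if load s B + s i <= 1 then rcons B i :: bs
               else B :: ff_insert s i bs
  end.

Definition first_fit (s : 'I_n -> R) (order : seq 'I_n) : seq (seq 'I_n) :=
  foldl (fun bins i => ff_insert s i bins) [::] order.

(* L is a possible output of WFFI-R: items sorted nondecreasingly by s_i/w_i
   (arbitrary tie breaking), First-Fit, then bins reordered nonincreasingly
   by total weight (arbitrary tie breaking). *)
Definition wffir_output (s w : 'I_n -> R) (L : seq (seq 'I_n)) : Prop :=
  exists order : seq 'I_n,
    [/\ perm_eq order (enum 'I_n),
        sorted (fun i j => s i / w i <= s j / w j) order,
        perm_eq L (first_fit s order) &
        sorted (fun B C => load w C <= load w B) L].

End MWSBP.

(* Main.v *)
Require Import Defs.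
From mathcomp Require Import all_boot all_order all_algebra.
From mathcomp Require Import ring lra zify.
Set Implicit Arguments. Unset Strict Implicit. Unset Printing Implicit Defensive.
Import Order.TTheory GRing.Theory Num.Theory.
Local Open Scope ring_scope.

Section LB.
Variables (R : rcfType) (n : nat) (s : 'I_n -> R).
Hypothesis s0 : forall i, 0 <= s i.

Lemma load_cat (A B : seq 'I_n) : load s (A ++ B) = load s A + load s B.
Proof. by rewrite /load big_cat. Qed.

Lemma load_ge0 (A : seq 'I_n) : 0 <= load s A.
Proof. by rewrite /load; apply: sumr_ge0 => i _. Qed.

Lemma load_flatten (P : seq (seq 'I_n)) :
  load s (flatten P) = \sum_(B <- P) load s B.
Proof. by rewrite /load big_flatten. Qed.

Lemma load_filter (A : seq 'I_n) (p : pred 'I_n) :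
  load s [seq x <- A | p x] <= load s A.
Proof.
rewrite /load big_filter [X in _ <= X](bigID p) /= lerDl.
by apply: sumr_ge0 => i _.
Qed.

Definition Q (P : seq (seq 'I_n)) t := load s (flatten (drop t P)).

Lemma cost_Q (P : seq (seq 'I_n)) : cost s P = \sum_(t < size P) Q P t.
Proof.
elim: P => [|B P IH]; first by rewrite /cost !big_ord0.
rewrite /cost /= big_ord_recl /= [in RHS]big_ord_recl /=.
rewrite /Q /= load_cat mul1r.
have -> : \sum_(i < size P) (bump 0 i).+1%:R * load s (nth [::] P (0 + i))
   = cost s P + load s (flatten P).
  rewrite /cost load_flatten (big_nth [::]) big_mkord -big_split /=.
  apply: eq_bigr => i _; rewrite /bump /= add1n add0n.
  by rewrite -[i.+2]addn1 natrD mulrDl mul1r.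
have -> : \sum_(i < size P) load s (flatten (drop (0 + i) P)) = \sum_(i < size P) Q P i.
  by apply: eq_bigr => i _; rewrite add0n.
rewrite IH; ring.
Qed.


Lemma Q_take (P : seq (seq 'I_n)) t :
  Q P t + load s (flatten (take t P)) = load s (flatten P).
Proof. by rewrite /Q addrC -load_cat -flatten_cat cat_take_drop. Qed.

Lemma load_take_le (P : seq (seq 'I_n)) t :
  all (fun B => load s B <= 1) P -> load s (flatten (take t P)) <= t%:R.
Proof.
elim: P t => [|B P IH] [|t] //=; rewrite ?take0 /= /load ?big_nil //.
move=> /andP [hB hP]; rewrite big_cat /= -/(load s B) -/(load s (flatten (take t P))).
by rewrite -natr1 addrC; apply: lerD => //; exact: IH.
Qed.

Lemma sumA (c : nat) (S : R) :
  \sum_(t < c) (S - t%:R) = c%:R * S - c%:R * (c%:R - 1) / 2.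
Proof.
elim: c => [|c IH]; first by rewrite big_ord0 !mul0r subr0.
rewrite big_ord_recr /= IH -natr1; by field.
Qed.

Lemma sumB (m : nat) :
  \sum_(j < m) ((m%:R - j%:R) / 2 - 1/6 : R) = m%:R * (m%:R + 1) / 4 - m%:R / 6.
Proof.
elim: m => [|m IH]; first by rewrite big_ord0 !mul0r subrr.
rewrite big_ord_recl /=.
have -> : \sum_(i < m) ((m.+1%:R - (bump 0 i)%:R) / 2 - 1/6 : R)
  = \sum_(i < m) ((m%:R - i%:R) / 2 - 1/6).
  by apply: eq_bigr => i _; rewrite /bump /= add1n -!natr1; field.
by rewrite IH -natr1; field.
Qed.


Lemma Q_ge0 P t : 0 <= Q P t.
Proof. exact: load_ge0. Qed.

Lemma Q_geS P t : all (fun B => load s B <= 1) P ->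
  load s (flatten P) - t%:R <= Q P t.
Proof.
move=> hP; rewrite -(Q_take P t); have := load_take_le t hP; lra.
Qed.

Lemma size_geS P : all (fun B => load s B <= 1) P ->
  load s (flatten P) <= (size P)%:R.
Proof.
move=> hP; have := load_take_le (size P) hP; by rewrite take_size.
Qed.

Lemma split_cost P (c : nat) : (c <= size P)%N ->
  cost s P = \sum_(0 <= t < c) Q P t + \sum_(c <= t < size P) Q P t.
Proof.
by move=> hc; rewrite cost_Q -(big_mkord xpredT (Q P)) (big_cat_nat (leq0n c) hc).
Qed.

Lemma LB_Psi (P : seq (seq 'I_n)) (c : nat) :
  all (fun B => load s B <= 1) P ->
  c%:R < load s (flatten P) + 1 ->
  c%:R * load s (flatten P) - c%:R * (c%:R - 1) / 2 <= cost s P.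
Proof.
move=> hP hc.
have cp : (c <= size P)%N.
  have := size_geS hP; rewrite -ltnS -(ltr_nat R) -natr1; lra.
rewrite (split_cost cp) -sumA.
have -> : \sum_(t < c) (load s (flatten P) - t%:R)
  = \sum_(0 <= t < c) (load s (flatten P) - t%:R) by rewrite big_mkord.
rewrite -[X in X <= _]addr0; apply: lerD.
  by apply: ler_sum => t _; exact: Q_geS.
by apply: sumr_ge0 => t _; exact: Q_ge0.
Qed.


End LB.

Section PW.
Variable R : rcfType.

Lemma pw_sum (ws : seq R) (y : R) :
  all (fun z => 1 < y + z) ws -> pairwise (fun a b => 1 < a + b) ws -> ws != [::] ->
  (size ws)%:R + 1 <= 2 * (y + \sum_(z <- ws) z).
Proof.
elim: ws y => [//|z zs IH] y /= /andP [hyz hall] /andP [hz hzs] _.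
rewrite big_cons.
case: zs IH hall hz hzs => [|z' zs'] IH hall hz hzs.
  by rewrite big_nil /=; lra.
have ne : z' :: zs' != [::] by [].
case: (lerP y (1/2)) => hy.
- have := IH y hall hzs ne; rewrite -natr1 /=; lra.
- have := IH z hz hzs ne; rewrite -natr1 /=; lra.
Qed.

Lemma pw_map (T : eqType) (f : T -> R) (J : seq T) :
  uniq J -> {in J &, forall x y, x != y -> 1 < f x + f y} ->
  pairwise (fun a b => 1 < a + b) [seq f x | x <- J].
Proof.
elim: J => [//|x J IH] /= /andP [xJ uJ] h.
apply/andP; split; last first.
  by apply: IH => // a b aJ bJ; apply: h; rewrite inE ?aJ ?bJ orbT.
apply/allP => _ /mapP [y yJ ->]; apply: h; rewrite ?inE ?eqxx ?yJ ?orbT //.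
by apply/eqP => exy; move: xJ; rewrite exy yJ.
Qed.

End PW.

Section LB2.
Variables (R : rcfType) (n : nat) (s : 'I_n -> R).
Hypothesis s0 : forall i, 0 <= s i.
Variable I : seq 'I_n.
Hypothesis uI : uniq I.
Hypothesis hinc : {in I &, forall x y, x != y -> 1 < s x + s y}.
Hypothesis h13 : {in I, forall x, 1/3 < s x}.

Lemma sumJ (J : seq 'I_n) : uniq J -> {subset J <= I} -> J != [::] ->
  (size J)%:R / 2 - 1/6 <= load s J.
Proof.
case: J => [//|x J] uJ sJ _.
have xI : x \in I by apply: sJ; rewrite inE eqxx.
rewrite /load big_cons.
case: J uJ sJ => [|y J] uJ sJ.
  by rewrite big_nil /=; have := h13 xI; lra.
have pw : pairwise (fun a b => 1 < a + b) [seq s z | z <- x :: y :: J].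
  apply: pw_map => // a b aJ bJ; apply: hinc; exact: sJ.
move: pw; rewrite map_cons pairwise_cons => /andP [hx pw].
have := pw_sum hx pw isT.
rewrite (big_map s xpredT (fun z => z)) /= size_map.
rewrite -/(load s (y :: J)) /load big_cons.
rewrite -[(size J).+2]addn1 natrD -natr1; lra.
Qed.

Lemma uniq_flatten_in (P : seq (seq 'I_n)) B : uniq (flatten P) -> B \in P -> uniq B.
Proof.
elim: P => [//|C P IH] /=; rewrite cat_uniq => /and3P [uC _ uP].
by rewrite inE => /orP [/eqP -> //|]; exact: IH.
Qed.

Lemma bin_count B : uniq B -> load s B <= 1 -> (count (mem I) B <= 1)%N.
Proof.
move=> uB hB; rewrite leqNgt; apply/negP => h2.
set F := [seq x <- B | x \in I].
have sF : size F = count (mem I) B by rewrite size_filter.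
have uF : uniq F by apply: filter_uniq.
have hF := load_filter s0 B (mem I).
case E : F => [|x [|y rest]]; rewrite E in sF uF hF; rewrite -?sF // in h2.
move: uF => /= /andP [xn /andP [_ _]].
have xI : x \in I.
  have : x \in F by rewrite E inE eqxx.
  by rewrite mem_filter => /andP [].
have yI : y \in I.
  have : y \in F by rewrite E !inE eqxx orbT.
  by rewrite mem_filter => /andP [].
have xy : x != y by apply: contraNneq xn => ->; rewrite inE eqxx.
have := hinc xI yI xy.
have : 0 <= load s rest by exact: load_ge0.
move=> h0 h1; move: h0 hF hB h1; rewrite -/F E /load !big_cons; lra.
Qed.


Lemma count_take P t : uniq (flatten P) -> all (fun B => load s B <= 1) P ->
  (count (mem I) (flatten (take t P)) <= t)%N.
Proof.
elim: P t => [|B P IH] [|t] //=; rewrite ?take0 //=.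
rewrite cat_uniq => /and3P [uB _ uP] /andP [hB hP].
rewrite count_cat -add1n; apply: leq_add; first exact: bin_count.
exact: IH.
Qed.

Lemma count_all P : perm_eq (flatten P) (enum 'I_n) -> count (mem I) (flatten P) = size I.
Proof.
move=> hp; rewrite (permP hp) -size_filter.
apply: perm_size; apply: uniq_perm => //; first by apply: filter_uniq; exact: enum_uniq.
by move=> x; rewrite mem_filter mem_enum andbT.
Qed.

Lemma count_split P t : count (mem I) (flatten P) =
  (count (mem I) (flatten (take t P)) + count (mem I) (flatten (drop t P)))%N.
Proof. by rewrite -count_cat -flatten_cat cat_take_drop. Qed.

Lemma Q_geI P t : perm_eq (flatten P) (enum 'I_n) -> all (fun B => load s B <= 1) P ->
  (t < size I)%N -> ((size I)%:R - t%:R) / 2 - 1/6 <= Q s P t.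
Proof.
move=> hp hP ht.
have uP : uniq (flatten P) by rewrite (perm_uniq hp) enum_uniq.
have hc := count_split P t; rewrite (count_all hp) in hc.
have hle := count_take t uP hP.
set J := [seq x <- flatten (drop t P) | x \in I].
have eJ : size J = count (mem I) (flatten (drop t P)) by rewrite size_filter.
have sJ : (size I - t <= size J)%N.
  by rewrite eJ {1}hc leq_subLR leq_add2r.
have uJ : uniq J.
  apply: filter_uniq; move: uP; rewrite -{1}(cat_take_drop t P) flatten_cat cat_uniq.
  by case/and3P.
have subJ : {subset J <= I} by move=> x; rewrite mem_filter => /andP [].
have neJ : J != [::] by rewrite -size_eq0 -lt0n; apply: leq_trans sJ; rewrite subn_gt0.
have := sumJ uJ subJ neJ.
have := load_filter s0 (flatten (drop t P)) (mem I).
rewrite -/J /Q.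
have : ((size I)%:R - t%:R : R) <= (size J)%:R.
  by rewrite -natrB ?ler_nat // ltnW.
lra.
Qed.


Lemma LB_Phi P (c : nat) : perm_eq (flatten P) (enum 'I_n) ->
  all (fun B => load s B <= 1) P -> (c <= size I)%N ->
  c%:R * load s (flatten P) - c%:R * (c%:R - 1) / 2
  + ((size I)%:R - c%:R) * ((size I)%:R - c%:R + 1) / 4 - ((size I)%:R - c%:R) / 6
  <= cost s P.
Proof.
move=> hp hP hc.
have uP : uniq (flatten P) by rewrite (perm_uniq hp) enum_uniq.
have hIp : (size I <= size P)%N.
  have := count_split P (size P); rewrite (count_all hp) drop_size /= addn0 => ->.
  exact: count_take.
rewrite (split_cost s (leq_trans hc hIp)) (big_cat_nat hc hIp) /=.
set S := load s (flatten P).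
have h1 : c%:R * S - c%:R * (c%:R - 1) / 2 <= \sum_(0 <= t < c) Q s P t.
  rewrite -sumA; have -> : \sum_(t < c) (S - t%:R) = \sum_(0 <= t < c) (S - t%:R)
    by rewrite big_mkord.
  by apply: ler_sum => t _; exact: Q_geS.
have h3 : 0 <= \sum_(size I <= t < size P) Q s P t by apply: sumr_ge0 => t _; exact: Q_ge0.
have h2 : ((size I)%:R - c%:R) * ((size I)%:R - c%:R + 1) / 4 - ((size I)%:R - c%:R) / 6
    <= \sum_(c <= t < size I) Q s P t.
  rewrite -natrB // -sumB.
  have -> : \sum_(c <= t < size I) Q s P t = \sum_(0 <= j < size I - c) Q s P (j + c).
    by rewrite -{1}[c]add0n big_addn.
  rewrite big_mkord; apply: ler_sum => j _.
  have hj : (j + c < size I)%N by have := ltn_ord j; lia.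
  apply: le_trans (Q_geI hp hP hj).
  rewrite natrB // natrD; lra.
lra.
Qed.

End LB2.

Lemma split_first (T : Type) (p : pred T) (l : seq T) : has p l ->
  exists pre B post, [/\ l = pre ++ B :: post, p B & ~~ has p pre].
Proof.
elim: l => [//|x l IH] /=; case px: (p x) => /= h.
  by exists [::], x, l.
have [pre [B [post [-> pB hpre]]]] := IH h.
by exists (x :: pre), B, post; rewrite /= px.
Qed.


Lemma pairwise_inP (T : eqType) (r : rel T) (a : seq T) : symmetric r -> uniq a ->
  (pairwise r a <-> {in a &, forall x y, x != y -> r x y}).
Proof.
move=> sr; elim: a => [|x a IH] /=; first by split.
move=> /andP [xa ua]; have [IH1 IH2] := IH ua; split.
- move=> /andP [/allP hx /IH1 ha] y z; rewrite !inE => /orP [/eqP->|ya] /orP [/eqP->|za].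
  + by rewrite eqxx.
  + by move=> _; apply: hx.
  + by move=> _; rewrite sr; apply: hx.
  + exact: ha.
- move=> h; apply/andP; split.
    apply/allP => y ya; apply: h; rewrite ?inE ?eqxx ?ya ?orbT //.
    by apply: contraNneq xa => ->.
  by apply: IH2 => y z ya za; apply: h; rewrite inE ?ya ?za orbT.
Qed.

Section FF.
Variables (R : rcfType) (n : nat) (s : 'I_n -> R).
Hypothesis hs : forall i, 0 < s i <= 1.

Lemma s0 i : 0 <= s i. Proof. by case/andP: (hs i) => /ltW. Qed.

Fixpoint good (bs : seq (seq 'I_n)) : bool :=
  if bs is B :: bs' then all (fun x => 1 < load s B + s x) (flatten bs') && good bs'
  else true.

Definition ffinv bs := [&& good bs, all (fun B => B != [::]) bs & all (fun B => load s B <= 1) bs].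

Lemma load_rcons B i : load s (rcons B i) = load s B + s i.
Proof. by rewrite /load -cats1 big_cat big_seq1. Qed.

Lemma ff_perm i bs : perm_eq (flatten (ff_insert s i bs)) (i :: flatten bs).
Proof.
elim: bs => [|B bs IH] /=; first by [].
case: ifP => _ /=.
  by rewrite -cats1 -catA perm_catCA.
apply: (perm_trans (y := B ++ i :: flatten bs)); first by rewrite perm_cat2l.
by rewrite -cat1s perm_catCA.
Qed.

Lemma ff_inv i bs : ffinv bs -> ffinv (ff_insert s i bs).
Proof.
elim: bs => [|B bs IH] /=.
  by move=> _; rewrite /ffinv /= /load big_seq1; case/andP: (hs i) => _ ->.
rewrite /ffinv /= => /and3P [/andP [hB gbs] /andP [nB nbs] /andP [lB lbs]].
case: ifP => hfit /=.
- rewrite gbs nbs lbs load_rcons hfit -size_eq0 size_rcons /= andbT !andbT.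
  apply/allP => x xb; have := allP hB x xb; have := s0 i; lra.
- have := IH; rewrite /ffinv gbs nbs lbs => /(_ isT) /and3P [-> -> ->].
  rewrite nB lB !andbT.
  apply/allP => x; rewrite (perm_mem (ff_perm i bs)) inE => /orP [/eqP ->|xb].
    by rewrite ltNge hfit.
  exact: (allP hB).
Qed.

Lemma ff_fold (o : seq 'I_n) bs : ffinv bs ->
  ffinv (foldl (fun b i => ff_insert s i b) bs o) /\
  perm_eq (flatten (foldl (fun b i => ff_insert s i b) bs o)) (flatten bs ++ o).
Proof.
elim: o bs => [|i o IH] bs hb /=; first by rewrite cats0.
have [h1 h2] := IH _ (ff_inv i hb); split => //.
apply: (perm_trans h2); rewrite -cat1s catA perm_cat2r.
apply: (perm_trans (ff_perm i bs)); by rewrite -cat1s perm_catC.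
Qed.


Lemma mem_load x C : x \in C -> s x <= load s C.
Proof.
elim: C => [//|y C IH]; rewrite inE /load big_cons -/(load s C) => /orP [/eqP ->|xC].
  by have := load_ge0 s0 C; lra.
by have := IH xC; have := s0 y; lra.
Qed.

Lemma good_cat a b : good (a ++ b) -> good b.
Proof. by elim: a => [//|B a IH] /= /andP [_ /IH]. Qed.

Lemma good_pw bs : good bs ->
  pairwise (fun C D => all (fun y => 1 < load s C + s y) D) bs.
Proof.
elim: bs => [//|B bs IH] /= /andP [hB gbs]; rewrite IH // andbT.
apply/allP => C Cb; apply/allP => y yC; apply: (allP hB).
by apply/flattenP; exists C.
Qed.

Lemma good_pair bs : good bs -> all (fun B => B != [::]) bs ->
  pairwise (fun B C => 1 < load s B + load s C) bs.
Proof.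
elim: bs => [//|B bs IH] /= /andP [hB gbs] /andP [_ nbs]; rewrite IH // andbT.
apply/allP => C Cb; case: C Cb => [|x C] Cb; first by have := allP nbs _ Cb.
have : 1 < load s B + s x by apply: (allP hB); apply/flattenP; exists (x :: C) => //; rewrite inE eqxx.
have := mem_load (mem_head x C); lra.
Qed.

Lemma uniq_bins (bs : seq (seq 'I_n)) : uniq (flatten bs) -> all (fun B => B != [::]) bs -> uniq bs.
Proof.
elim: bs => [//|B bs IH] /=; rewrite cat_uniq => /and3P [_ hdis ub] /andP [nB nbs].
rewrite IH // andbT; apply/negP => Bb.
case: B nB hdis Bb => [//|x B] _ hdis Bb.
move/negP: hdis; apply; apply/hasP; exists x; last by rewrite inE eqxx.
by apply/flattenP; exists (x :: B) => //; rewrite inE eqxx.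
Qed.

Lemma pairwise_in2 (T : eqType) (r : rel T) (a : seq T) : pairwise r a ->
  {in a &, forall x y, x != y -> r x y || r y x}.
Proof.
elim: a => [//|z a IH] /= /andP [/allP hz pa] x y.
rewrite !inE => /orP [/eqP->|xa] /orP [/eqP->|ya].
- by rewrite eqxx.
- by move=> _; rewrite hz.
- by move=> _; rewrite hz ?orbT.
- exact: IH.
Qed.

Lemma flatten_filter_subseq (T : eqType) (p : pred (seq T)) (l : seq (seq T)) :
  subseq (flatten [seq C <- l | p C]) (flatten l).
Proof.
elim: l => [//|C l IH] /=; case: (p C) => /=.
  by rewrite cat_subseq ?subseq_refl.
apply: (subseq_trans IH); exact: suffix_subseq.
Qed.


Lemma singleton_map (T : Type) (Ls : seq (seq T)) : all (fun C => size C == 1%N) Ls ->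
  Ls = [seq [:: x] | x <- flatten Ls].
Proof.
elim: Ls => [//|C Ls IH] /= /andP [hC hL].
by case: C hC => [|x [|y C]] //= _; rewrite -IH.
Qed.

Lemma exists_I bs : ffinv bs -> uniq (flatten bs) ->
  (1 <= count (fun B => (load s B <= 2/3)%R) bs)%N ->
  exists I : seq 'I_n, [/\ uniq I, size I = (count (fun B => (load s B <= 2/3)%R) bs).-1,
    {in I &, forall x y, x != y -> 1 < s x + s y} & {in I, forall x, 1/3 < s x}].
Proof.
set p := fun B => load s B <= 2/3.
move=> /and3P [gb nb lb] ub hc.
have : has p bs by rewrite has_count.
move=> /(split_first) [pre [B0 [post [E pB hpre]]]].
have cE : count p bs = (count p post).+1.
  by rewrite E count_cat /= pB; move: hpre; rewrite has_count lt0n negbK => /eqP ->.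
rewrite cE /=.
have gB : good (B0 :: post) by rewrite E in gb; exact: good_cat gb.
move: gB => /= /andP [hall gpost].
have npost : all (fun B => B != [::]) post by move: nb; rewrite E all_cat /= => /andP [_ /andP [_ ->]].
have upost : uniq (flatten post).
  by move: ub; rewrite E flatten_cat cat_uniq /= cat_uniq => /and3P [_ _ /and3P [_ _ ->]].
set Ls := [seq C <- post | p C].
have big13 : forall x, x \in flatten post -> 1/3 < s x.
  by move=> x xp; have := allP hall x xp; move: pB; rewrite /p; lra.
have sing : all (fun C => size C == 1%N) Ls.
  apply/allP => C; rewrite mem_filter => /andP [pC Cp].
  have CI : {subset C <= flatten post} by move=> x xC; apply/flattenP; exists C.
  case: C pC Cp CI => [|a [|b C]] // pC Cp CI; first by have := allP npost _ Cp.
  have ha := big13 a (CI a (mem_head _ _)).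
  have hb := big13 b (CI b ltac:(by rewrite !inE eqxx orbT)).
  move: pC; rewrite /p /load !big_cons -/(load s C).
  have := load_ge0 s0 C; lra.
exists (flatten Ls); split.
- by apply: subseq_uniq upost; exact: flatten_filter_subseq.
- by rewrite -(size_map (fun x => [:: x])) -singleton_map // size_filter.
- move=> x y xI yI xy.
  have pw : pairwise (fun C D => all (fun y => 1 < load s C + s y) D) Ls.
    by apply: subseq_pairwise (good_pw gpost); exact: filter_subseq.
  rewrite (singleton_map sing) pairwise_map in pw.
  have uI : uniq (flatten Ls) by apply: subseq_uniq upost; exact: flatten_filter_subseq.
  have := pairwise_in2 pw xI yI xy; rewrite /= /load !big_seq1 !andbT.
  by case/orP => //; rewrite addrC.
- move=> x xI; apply: big13.
  by apply: (mem_subseq (flatten_filter_subseq p post)).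
Qed.

End FF.

Section Num.
Variable R : rcfType.

Lemma rho_facts : let r : R := (7 + Num.sqrt 37) / 8 in
  [/\ 16 * r ^+ 2 - 28 * r + 3 = 0, 49/30 < r & r < 18/11].
Proof.
move=> r.
have q0 : 0 <= Num.sqrt (37:R) by exact: sqrtr_ge0.
have q2 : Num.sqrt (37:R) ^+ 2 = 37 by rewrite sqr_sqrtr //.
have hr : r * 8 = 7 + Num.sqrt 37 by rewrite /r mulfVK // (eqr_nat R 8 0).
split.
- have -> : 16 * r ^+ 2 - 28 * r + 3 = (Num.sqrt 37 ^+ 2 - 37)/4 by rewrite /r; field.
  by rewrite q2 subrr mul0r.
- have : 91/15 < Num.sqrt (37:R).
    rewrite ltNge; apply/negP => h.
    have := ler_pM q0 q0 h h; rewrite -expr2 q2; lra.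
  rewrite /r; lra.
- have : Num.sqrt (37:R) < 67/11.
    rewrite ltNge; apply/negP => h.
    have h0 : (0:R) <= 67/11 by lra.
    have := ler_pM h0 h0 h h; rewrite -[Num.sqrt 37 * _]expr2 q2; lra.
  rewrite /r; lra.
Qed.

Lemma ceil_ex (w : R) (N : nat) : 0 <= w -> w <= N%:R ->
  exists c : nat, [/\ w <= c%:R, c%:R < w + 1 & (c <= N)%N].
Proof.
move=> w0 wN.
have ex : exists k : nat, w <= k%:R by exists N.
case: (ex_minnP ex) => c hc hmin.
exists c; split => //; last exact: hmin.
case: c hc hmin => [|c] hc hmin; first by rewrite /=; lra.
rewrite ltNge; apply/negP => h.
have : (c.+1 <= c)%N by apply: hmin; move: h; rewrite -natr1; lra.
by rewrite ltnn.
Qed.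

Definition Psi (c : nat) (S : R) := c%:R * S - c%:R * (c%:R - 1) / 2.
Definition Phi (h c : nat) (S : R) := c%:R * S - c%:R * (c%:R - 1) / 2
  + (h%:R - c%:R) * (h%:R - c%:R + 1) / 4 - (h%:R - c%:R) / 6.


Lemma reg1 (r X Y h S z : R) : 16 * r ^+ 2 - 28 * r + 3 = 0 ->
  49/30 < r -> r < 18/11 -> 1 <= h -> h + 1 <= 2 * Y -> 0 <= X ->
  S = X + Y -> z = 2 * S - h + 5/6 ->
  3/4 * X ^+ 2 + X / 2 + 3/2 * X * Y + Y * (h + 2) / 2 <=
  r * (z * S - z ^+ 2 / 2 + z / 2 + (h - z) ^+ 2 / 4 + (h - z) / 12 - 1/16).
Proof.
move=> E rl ru h1 hY X0 hS hz.
set e := Y - h / 2.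
set a1 := r * 5 / 6 - 1 / 2.
set V := (8 * r - 6) * (X + Y - h / 2) - 3 * h.
set T := (8 * r - 6) * (h - 1/2 + 8 * r / 9) + h * (33 - 20 * r) / 3 - 16 * a1 ^+ 2.
have key : 8 * (8 * r - 6) * (r * (z * S - z ^+ 2 / 2 + z / 2 + (h - z) ^+ 2 / 4
    + (h - z) / 12 - 1/16) - (3/4 * X ^+ 2 + X / 2 + 3/2 * X * Y + Y * (h + 2) / 2))
  = (V + 4 * a1) ^+ 2 + (8 * r - 6) * ((2 * e - 1) * (3 * e - 1/2 + h)) + T
    + (h ^+ 2 + h / 3) * (16 * r ^+ 2 - 28 * r + 3).
  by rewrite /T /V /e /a1 hz hS; field.
rewrite E mulr0 addr0 in key.
have T0 : 0 <= T.
  rewrite /T /a1.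
  have hh : 0 <= (h - 1) * (4 * r + 15) by apply: mulr_ge0; lra.
  nra.
have e1 : 0 <= (2 * e - 1) * (3 * e - 1/2 + h) by apply: mulr_ge0; rewrite /e; lra.
have p1 : 0 <= (8 * r - 6) * ((2 * e - 1) * (3 * e - 1/2 + h)) by apply: mulr_ge0 => //; lra.
have sq : 0 <= (V + 4 * a1) ^+ 2 by exact: sqr_ge0.
have pos : 0 < 8 * (8 * r - 6) by lra.
rewrite -subr_ge0 -(pmulr_rge0 _ pos) key.
lra.
Qed.


Lemma reg2 (r X Y h : R) :
  49/30 < r -> r < 18/11 -> 0 <= X -> 0 <= Y ->
  h <= X + Y + 1/6 -> h + 1 <= 2 * Y ->
  3/4 * X ^+ 2 + X / 2 + 3/2 * X * Y + Y * (h + 2) / 2 <=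
  r * ((X + Y) * (X + Y + 1) / 2).
Proof.
move=> rl ru X0 Y0 hS hY.
set d := r - 49/30.
have d0 : 0 <= d by rewrite /d; lra.
have a1 : 0 <= Y * (X + Y + 1/6 - h) by apply: mulr_ge0; lra.
have a2 : 0 <= Y * (2 * Y - 1 - h) by apply: mulr_ge0; lra.
have s1 : 0 <= (X - Y) ^+ 2 by exact: sqr_ge0.
have s2 : 0 <= X * Y by exact: mulr_ge0.
have b1 : 0 <= d * (X - Y) ^+ 2 by exact: mulr_ge0.
have b2 : 0 <= d * (X * Y) by exact: mulr_ge0.
have b3 : 0 <= d * X by exact: mulr_ge0.
have b4 : 0 <= d * Y by exact: mulr_ge0.
have -> : r = d + 49/30 by rewrite /d; ring.
nra.
Qed.


Lemma Psi_ge (c : nat) (S : R) : S <= c%:R -> c%:R < S + 1 ->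
  S * (S + 1) / 2 <= Psi c S.
Proof.
move=> h1 h2; rewrite /Psi.
have : 0 <= (c%:R - S) * (S + 1 - c%:R) by apply: mulr_ge0; lra.
nra.
Qed.

Lemma num_main (g u : nat) (X Y OPT : R) :
  2/3 * g%:R <= X -> X <= g%:R -> 0 <= Y -> Y <= u%:R ->
  ((u == 1)%N -> Y <= 2/3) ->
  ((2 <= u)%N -> u%:R <= 2 * Y) ->
  (forall c : nat, c%:R < X + Y + 1 -> Psi c (X + Y) <= OPT) ->
  ((1 <= u)%N -> forall c : nat, (c <= u.-1)%N -> Phi u.-1 c (X + Y) <= OPT) ->
  X * (g%:R + 1) / 2 + g%:R * Y + Y * (u%:R + 1) / 2
    <= (7 + Num.sqrt 37) / 8 * OPT.
Proof.
move=> hX1 hX2 Y0 Yu hu1 hu2 hPsi hPhi.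
have [E rl ru] := rho_facts.
set r := (7 + Num.sqrt 37) / 8 in E rl ru *.
have X0 : 0 <= X by have : (0:R) <= g%:R by []; lra.
have OPT0 : 0 <= OPT by have := hPsi 0%N; rewrite /Psi !mul0r subr0; apply; lra.
have [c [c1 c2 _]] : exists c : nat, [/\ X + Y <= c%:R, c%:R < X + Y + 1 & (c <= g + u)%N].
  by apply: ceil_ex; rewrite ?natrD; lra.
have hc := hPsi c c2.
have hc' := Psi_ge c1 c2.
have gX : g%:R <= 3/2 * X by lra.
case: u Yu hu1 hu2 hPhi => [|[|u]] Yu hu1 hu2 hPhi.
-
  have -> : Y = 0 by lra.
  have h : 0 <= X * (r * (X + 1) - (g%:R + 1)) by apply: mulr_ge0 => //; nra.
  nra.
-
  have Y23 := hu1 isT.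
  case: g hX1 hX2 gX => [|g] hX1 hX2 gX.
  + have -> : X = 0 by lra.
    case: (ltrP 0 Y) => Yp.
    * have := hPsi 1%N; rewrite /Psi; move=> /(_ _) h1.
      have := h1 ltac:(lra); nra.
    * have -> : Y = 0 by lra.
      nra.
  + have X23 : 2/3 <= X by move: hX1; rewrite -natr1; have := ler0n R g; nra.
    have k1 : X * (g.+1%:R + 1) / 2 + g.+1%:R * Y + Y * (1%:R + 1) / 2
      <= (3/2 * X + 1) * (X / 2 + Y).
      have : 0 <= (3/2 * X - g.+1%:R) * (X / 2 + Y) by apply: mulr_ge0; lra.
      nra.
    have k2 : (3/2 * X + 1) * (X / 2 + Y) <= r * ((X + Y) * (X + Y + 1) / 2).
      have p1 : 0 <= (r - 3/2) * (X * Y) by apply: mulr_ge0; [lra|exact: mulr_ge0].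
      have p2 : 0 <= (r / 2 - 3/4) * X ^+ 2 by apply: mulr_ge0; [lra|exact: sqr_ge0].
      have p3 : 0 <= r * Y ^+ 2 by apply: mulr_ge0; [lra|exact: sqr_ge0].
      have p4 : 0 <= (r - 3/2) * Y by apply: mulr_ge0; lra.
      nra.
    nra.
-
  set h : R := u.+1%:R.
  have hu : u.+2%:R = h + 1 by rewrite /h -natr1.
  have h1 : 1 <= h by rewrite /h ler1n.
  have hY : h + 1 <= 2 * Y by rewrite -hu; exact: hu2.
  have kF : X * (g%:R + 1) / 2 + g%:R * Y + Y * (u.+2%:R + 1) / 2
     <= 3/4 * X ^+ 2 + X / 2 + 3/2 * X * Y + Y * (h + 2) / 2.
    rewrite hu.
    have : 0 <= (3/2 * X - g%:R) * (X / 2 + Y) by apply: mulr_ge0; lra.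
    nra.
  apply: (le_trans kF).
  case: (ltrP (h - 1/6) (X + Y)) => hS.
  + apply: le_trans (reg2 rl ru X0 Y0 _ hY) _; first lra.
    by apply: ler_wpM2l; [lra|lra].
  + have [c' [d1 d2 d3]] : exists c : nat,
        [/\ 2 * (X + Y) - h + 1/3 <= c%:R, c%:R < 2 * (X + Y) - h + 1/3 + 1 & (c <= u.+1)%N].
      by apply: ceil_ex; rewrite -/h; lra.
    have hP := hPhi isT c' d3.
    apply: le_trans (reg1 E rl ru h1 hY X0 erefl erefl) _.
    have r0 : 0 <= r by lra.
    apply: (le_trans _ (ler_wpM2l r0 hP)).
    apply: (ler_wpM2l r0).
    rewrite /Phi /= -/h.
    set z := 2 * (X + Y) - h + 5/6.
    have : (c'%:R - z) ^+ 2 <= 1/4.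
      have : 0 <= (c'%:R - z + 1/2) * (1/2 - (c'%:R - z)) by apply: mulr_ge0; rewrite /z; lra.
      nra.
    rewrite /z; nra.
Qed.

End Num.

Section C.
Variable R : rcfType.

Fixpoint wsum (i0 : nat) (xs : seq R) : R :=
  if xs is x :: xs' then (i0.+1)%:R * x + wsum i0.+1 xs' else 0.

Lemma wsum_big i0 (xs : seq R) :
  \sum_(k < size xs) (i0 + k).+1%:R * nth 0 xs k = wsum i0 xs.
Proof.
elim: xs i0 => [|x xs IH] i0 /=; first by rewrite big_ord0.
rewrite big_ord_recl /= addn0 -IH; congr (_ + _).
by apply: eq_bigr => k _; rewrite /bump /= add1n addnS.
Qed.

Lemma wsum_cat i0 (A B : seq R) : wsum i0 (A ++ B) = wsum i0 A + wsum (i0 + size A) B.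
Proof.
elim: A i0 => [|x A IH] i0 /=; first by rewrite add0r addn0.
by rewrite IH addnS addrA.
Qed.

Lemma sum_le_size (xs : seq R) (a : R) : all (fun y => y <= a) xs ->
  \sum_(y <- xs) y <= (size xs)%:R * a.
Proof.
elim: xs => [|x xs IH] /=; first by rewrite big_nil mul0r.
move=> /andP [hx hxs]; rewrite big_cons -natr1 mulrDl mul1r addrC.
by apply: lerD => //; exact: IH.
Qed.

Lemma sum_ge_size (xs : seq R) (a : R) : all (fun y => a <= y) xs ->
  (size xs)%:R * a <= \sum_(y <- xs) y.
Proof.
elim: xs => [|x xs IH] /=; first by rewrite big_nil mul0r.
move=> /andP [hx hxs]; rewrite big_cons -natr1 mulrDl mul1r addrC.
by apply: lerD => //; exact: IH.
Qed.

Lemma wsum_cheb i0 (xs : seq R) : sorted (fun a b => b <= a) xs ->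
  2 * wsum i0 xs <= (2 * i0%:R + (size xs)%:R + 1) * \sum_(y <- xs) y.
Proof.
elim: xs i0 => [|x xs IH] i0 /=; first by rewrite big_nil !mulr0.
move=> hp.
have hxs : sorted (fun a b => b <= a) xs by exact: path_sorted hp.
have hall : all (fun y => y <= x) xs.
  have := order_path_min (leT := fun a b => b <= a) _ hp.
  by apply; move=> a b c hab hbc; exact: le_trans hbc hab.
have := IH i0.+1 hxs; have := sum_le_size hall.
rewrite big_cons -!natr1; set Sx := \sum_(y <- xs) y; set W := wsum i0.+1 xs.
move=> h1 h2.
have h3 : 0 <= (size xs)%:R * x - Sx by lra.
nra.
Qed.

Lemma sorted_split (xs : seq R) (a : R) : sorted (fun a b => b <= a) xs ->
  all (fun y => a < y) (take (count (fun y => a < y) xs) xs) /\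
  all (fun y => y <= a) (drop (count (fun y => a < y) xs) xs).
Proof.
elim: xs => [//|x xs IH] hp /=.
have hxs : sorted (fun a b => b <= a) xs by exact: path_sorted hp.
have hall : all (fun y => y <= x) xs.
  have := order_path_min (leT := fun a b => b <= a) _ hp.
  by apply; move=> a' b c hab hbc; exact: le_trans hbc hab.
case: (ltrP a x) => hx /=.
  by rewrite /= hx /=; exact: IH.
rewrite add0n.
have c0 : count (fun y => a < y) xs = 0%N.
  apply/eqP; rewrite -leqn0 leqNgt -has_count; apply/hasP => [[y yx]].
  by have := allP hall y yx; lra.
rewrite c0 take0 drop0 /= hx; split => //.
by apply/allP => y yx; have := allP hall y yx; lra.
Qed.

End C.

Unset Implicit Arguments.

Theorem theorem2 (R : rcfType) (n : nat) (s : 'I_n -> R)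
  (hs : forall i, 0 < s i <= 1)
  (L : seq (seq 'I_n)) (hL : wffir_output s s L)
  (P : seq (seq 'I_n)) (hP : feasible s P) :
  cost s L <= (7 + Num.sqrt 37) / 8 * cost s P.
Proof.
have s0 : forall i, 0 <= s i by move=> i; case/andP: (hs i) => /ltW.
case: hL => order [hperm _ hLp hLs].
case: hP => [hPp [_ hP1]].
set F0 := first_fit s order.
have [hinv hflat] : ffinv s F0 /\ perm_eq (flatten F0) ([::] ++ order).
  by apply: ff_fold.
have hF0e : perm_eq (flatten F0) (enum 'I_n) by apply: perm_trans hflat _.
have uF0 : uniq (flatten F0) by rewrite (perm_uniq hF0e) enum_uniq.
move: (hinv) => /and3P [gF0 nF0 lF0].
have uB0 : uniq F0 by exact: uniq_bins.
have uL : uniq L by rewrite (perm_uniq hLp).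
have hLe : perm_eq (flatten L) (enum 'I_n) by apply: perm_trans (perm_flatten hLp) hF0e.
set ell := [seq load s B | B <- L].
have lL : all (fun B => load s B <= 1) L by rewrite (perm_all _ hLp).
have sorted_ell : sorted (fun a b => b <= a) ell by rewrite sorted_map.
have pw_ell : pairwise (fun a b => 1 < a + b) ell.
  rewrite pairwise_map.
  have pwF0 := good_pair hs gF0 nF0.
  have sym : symmetric (fun B C : seq 'I_n => 1 < load s B + load s C).
    by move=> B C; rewrite addrC.
  have [h1 _] := pairwise_inP sym uB0.
  have [_ h2] := pairwise_inP sym uL.
  apply: h2 => B C BL CL; apply: (h1 pwF0); by rewrite -(perm_mem hLp).
set g := count (fun y => 2/3 < y) ell.
have [hA hB] := sorted_split (2/3) sorted_ell.
set A := take g ell.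
set Bl := drop g ell.
have sA : size A = g by rewrite size_take; case: ltnP => // h; apply/eqP; rewrite eqn_leq h count_size.
set u := size Bl.
set X := \sum_(y <- A) y.
set Y := \sum_(y <- Bl) y.
have ell1 : all (fun y => y <= 1) ell by rewrite all_map.
have ell0 : all (fun y => 0 <= y) ell.
  by rewrite all_map; apply/allP => B _; exact: load_ge0.
have A1 : all (fun y => y <= 1) A.
  by apply/allP => y yA; apply: (allP ell1); exact: mem_take yA.
have A23 : all (fun y => 2/3 <= y) A.
  by apply/allP => y yA; have := allP hA y yA; lra.
have B0 : all (fun y => 0 <= y) Bl.
  by apply/allP => y yB; apply: (allP ell0); exact: mem_drop yB.
have X1 : X <= g%:R by rewrite -sA -[X in _ <= X]mulr1; exact: sum_le_size.
have X2 : 2/3 * g%:R <= X by rewrite -sA mulrC; exact: sum_ge_size.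
have Y0 : 0 <= Y by have := sum_ge_size B0; rewrite mulr0.
have Y23 : Y <= u%:R * (2/3) by exact: sum_le_size.
have Yu : Y <= u%:R by have : (0:R) <= u%:R by []; lra.
have hu1 : (u == 1)%N -> Y <= 2/3 by move=> /eqP hu; move: Y23; rewrite hu; lra.
have hu2 : (2 <= u)%N -> u%:R <= 2 * Y.
  move=> hu.
  have pwB : pairwise (fun a b => 1 < a + b) Bl by apply: subseq_pairwise pw_ell; exact: drop_subseq.
  have gen : forall l : seq R, (2 <= size l)%N -> pairwise (fun a b => 1 < a + b) l ->
      (size l)%:R <= 2 * \sum_(y <- l) y.
    move=> [|w ws] // hl; rewrite pairwise_cons => /andP [hw pws].
    have ne : ws != [::] by case: ws hl {hw pws}.
    have := pw_sum hw pws ne; rewrite big_cons /= -[(size ws).+1]addn1 natrD; lra.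
  exact: gen.
have ecost : cost s L = wsum 0 ell.
  rewrite -wsum_big size_map /cost; apply: eq_bigr => k _.
  by rewrite add0n (nth_map [::]).
have c1 := wsum_cheb 0 (take_sorted g sorted_ell).
have c2 := wsum_cheb g (drop_sorted g sorted_ell).
have hcost : cost s L <= X * (g%:R + 1) / 2 + g%:R * Y + Y * (u%:R + 1) / 2.
  rewrite ecost -(cat_take_drop g ell) wsum_cat -/A -/Bl add0n sA.
  move: c1 c2; rewrite -/A -/Bl -/X -/Y sA -/u; lra.
have eS : X + Y = load s (flatten P).
  rewrite /X /Y -big_cat /= cat_take_drop /ell big_map -load_flatten.
  by rewrite /load (perm_big _ hLe) (perm_big _ hPp).
have cu : count (fun B => (load s B <= 2/3)%R) F0 = u.
  rewrite -(permP hLp) -(count_map (load s) (fun y => y <= 2/3)) -/ell.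
  rewrite -(cat_take_drop g ell) count_cat -/A -/Bl.
  have -> : count (fun y => y <= 2/3) A = 0%N.
    apply/eqP; rewrite -leqn0 leqNgt -has_count; apply/hasP => [[y yA]].
    by have := allP hA y yA; lra.
  by rewrite add0n; apply/eqP; rewrite -all_count.
apply: (le_trans hcost); apply: num_main => //.
- move=> c hc; rewrite /Psi eS; apply: LB_Psi => //; by rewrite -eS.
- move=> hu c hc.
  have [I [uI sI hinc h13]] := exists_I hs hinv uF0 ltac:(by rewrite cu).
  rewrite cu in sI.
  rewrite /Phi eS -sI.
  apply: LB_Phi => //; by rewrite sI.
Qed.
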